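(* Let $(a,b)\in\mathcal{B}$ with $b$ even, $a\ge 1$, $a+b\ge 1$ and $b\neq 0$. Then $U=\{(a,b)\}$ is unavoidable.
   Context: The bicyclic inverse semigroup is $\mathcal{B}=\{(a,b)\in\mathbb{Z}\times\mathbb{Z}\mid a\ge 0,\ a+b\ge 0\}$ with multiplication $(a,b)(c,d)=(\max\{c+d,a\}-d,\ b+d)$. A subset $U\subseteq\mathcal{B}$ is called avoidable if $\mathcal{B}$ can be partitioned into two subsets $A$ and $B$ such that no element of $U$ can be written as a product $xy$ of two distinct elements $x\neq y$ both in $A$, or both in $B$. A set is unavoidable if it is not avoidable. *)

(* Defs.v *)
(* the bicyclic inverse semigroup as a subset of Z x Z. *)
From Stdlib Require Import ZArith.
Open Scope Z_scope.

Definition inB (p : Z * Z) : Prop := 0 <= fst p /\ 0 <= fst p + snd p.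

Definition bmul (p q : Z * Z) : Z * Z :=
  (Z.max (fst q + snd q) (fst p) - snd q, snd p + snd q).

(* U is avoidable: B can be partitioned into two parts A, B (encoded by a
   colouring col : Z*Z -> bool restricted to B, A = col^-1 true,
   B = col^-1 false; either part may be empty) such that no element of U is
   a product xy of distinct x <> y lying in the same part. *)
Definition avoidable (U : Z * Z -> Prop) : Prop :=
  exists col : Z * Z -> bool,
    forall x y : Z * Z, inB x -> inB y -> x <> y -> col x = col y ->
      ~ U (bmul x y).

Definition unavoidable (U : Z * Z -> Prop) : Prop := ~ avoidable U.

(* Main.v *)
Require Import Defs.
From Stdlib Require Import ZArith Lia.
Open Scope Z_scope.

Theorem proposition2p1 (a b : Z) :
  inB (a, b) -> Z.Even b -> 1 <= a -> 1 <= a + b -> b <> 0 ->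
  unavoidable (fun p => p = (a, b)).
Proof.
  intros HB [k Hk] H1 H2 H3 [col H]. subst b.
  unfold inB in HB; cbn [fst snd] in HB.
  set (p := Z.min a (a+k) - 1).
  assert (Hp1 : p <= a - 1 /\ p <= a + k - 1) by (unfold p; lia).
  assert (Hp2 : 0 <= p /\ 0 <= p + k) by (unfold p; lia).
  set (x := (a+k, k)). set (y := (a, k)). set (z := (p, k)).
  assert (Ix : inB x) by (unfold inB, x; cbn [fst snd]; lia).
  assert (Iy : inB y) by (unfold inB, y; cbn [fst snd]; lia).
  assert (Iz : inB z) by (unfold inB, z; cbn [fst snd]; lia).
  assert (Pxy : bmul x y = (a, 2*k)) by (unfold bmul, x, y; cbn [fst snd]; f_equal; [apply Z.max_case_strong; intros; lia | lia]).
  assert (Pxz : bmul x z = (a, 2*k)) by (unfold bmul, x, z; cbn [fst snd]; f_equal; [apply Z.max_case_strong; intros; lia | lia]).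
  assert (Pzy : bmul z y = (a, 2*k)) by (unfold bmul, z, y; cbn [fst snd]; f_equal; [apply Z.max_case_strong; intros; lia | lia]).
  assert (Dxy : x <> y) by (unfold x, y; intro E; injection E; lia).
  assert (Dxz : x <> z) by (unfold x, z; intro E; injection E; lia).
  assert (Dzy : z <> y) by (unfold z, y; intro E; injection E; lia).
  destruct (col x) eqn:Ex, (col y) eqn:Ey, (col z) eqn:Ez;
  first [ apply (H x y Ix Iy Dxy (eq_trans Ex (eq_sym Ey)) Pxy)
        | apply (H x z Ix Iz Dxz (eq_trans Ex (eq_sym Ez)) Pxz)
        | apply (H z y Iz Iy Dzy (eq_trans Ez (eq_sym Ey)) Pzy) ].
Qed.
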